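(* Let $f_{r,k}(x)=x^2\exp(r-x)+k$. For any $0\leq k<2$ there exists $r^*(k)$ such that for all $r\geq r^*(k)$ the map $f_{r,k}$ has an unstable fixed point $x_f>2$, i.e. $f_{r,k}(x_f)=x_f$ and $|f_{r,k}'(x_f)|>1$. *)

(* Defs.v *)
From Stdlib Require Import Reals.
Open Scope R_scope.

Definition f_rk (r k : R) (x : R) : R := x ^ 2 * exp (r - x) + k.

(* Main.v *)
Require Import Defs.
From Stdlib Require Import Reals Lra Psatz.
From Coquelicot Require Import Coquelicot.
Open Scope R_scope.

Lemma exp_big (y : R) : 0 < y -> 4 * y - 8 < exp y.
Proof.
  intro Hy.
  assert (H1 : 1 + y/2 < exp (y/2)) by (apply exp_ineq1; lra).
  assert (H2 : exp y = exp (y/2) * exp (y/2)) by (rewrite <- exp_plus; replace (y/2+y/2) with y by field; reflexivity).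
  rewrite H2. set (e := exp (y/2)) in *. assert (A : 0 < (e - (1+y/2)) * (e + (1+y/2))) by (apply Rmult_lt_0_compat; lra). assert (B : 0 <= (y/2-3)*(y/2-3)) by apply Rle_0_sqr. assert (C : (e - (1+y/2)) * (e + (1+y/2)) + (y/2-3)*(y/2-3) = e*e - (4*y-8)) by field. lra.
Qed.

Theorem lemma3p4 :
  forall k : R, 0 <= k < 2 ->
  exists rstar : R, forall r : R, rstar <= r ->
    exists xf : R, 2 < xf /\ f_rk r k xf = xf /\
      exists d : R, derivable_pt_lim (f_rk r k) xf d /\ 1 < Rabs d.
Proof.
  intros k Hk. exists 5. intros r Hr.
  set (h := fun x => x - f_rk r k x).
  assert (Hc : continuity h).
  { unfold h, f_rk. reg. }
  assert (Ha : h 5 < 0).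
  { unfold h, f_rk. assert (1 <= exp (r - 5)).
    { rewrite <- exp_0. destruct (Req_dec (r-5) 0) as [Z|Z]; [rewrite Z; lra| left; apply exp_increasing; lra]. }
    nra. }
  assert (Hb : 0 < h (2*r+4)).
  { unfold h, f_rk.
    assert (E : exp (r - (2*r+4)) = / exp (r+4)).
    { rewrite <- exp_Ropp. f_equal. lra. }
    rewrite E.
    assert (Hy := exp_big (r+4) ltac:(lra)).
    assert (P : 0 < exp (r+4)) by apply exp_pos.
    set (X := 2*r+4) in *.
    assert (X ^ 2 * / exp (r + 4) < X / 2).
    { apply (Rmult_lt_reg_r (exp (r+4))); auto.
      rewrite Rmult_assoc, Rinv_l by lra. assert (0 < X/2 * (exp (r+4) - 2*X)) by (apply Rmult_lt_0_compat; unfold X in *; lra). unfold X in *; nra. }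
    unfold X in *; lra. }
  destruct (IVT h 5 (2*r+4) Hc ltac:(lra) Ha Hb) as [x [[Hx1 Hx2] Hx]].
  assert (Fx : f_rk r k x = x) by (unfold h in Hx; lra).
  exists x. split; [lra|]. split; [exact Fx|].
  exists (2 * x * exp (r - x) - x^2 * exp (r - x)).
  split.
  { apply is_derive_Reals. unfold f_rk. auto_derive; auto. unfold Rminus. ring. }
  unfold f_rk in Fx.
  set (E := exp (r - x)) in *.
  assert (PE : 0 < E) by apply exp_pos.
  rewrite Rabs_left.
  - assert (HE : E * x^2 = x - k) by lra.
    assert (D : -(2 * x * E - x ^ 2 * E) * x = (x - k) * (x - 2)) by nra.
    nra.
  - nra.
Qed.
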